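(* Let $N\in\mathbb{N}$, $h=L/N$, $M>0$, $\mathcal{M}_0>0$, let $\mathcal{M}$ be a mobility function and $\phi^n\in\mathcal{C}_{\rm per}$ be such that the face-centered mobility $\check{\mathcal{M}}^n$ satisfies $\check{\mathcal{M}}^n\ge\mathcal{M}_0$ at all face centers. Suppose $\phi_1,\phi_2\in\mathcal{C}_{\rm per}$ satisfy $\langle\phi_1-\phi_2,1\rangle=0$, $\|\phi_1\|_\infty<1$ and $\|\phi_2\|_\infty\le M$. Then $$\|\mathcal{L}_{\check{\mathcal{M}}^n}^{-1}(\phi_1-\phi_2)\|_\infty\le C_4:=C_3\mathcal{M}_0^{-1}h^{-1/2},$$ where $C_3>0$ depends only upon $M$ and $\Omega$.
   Context: $\Omega=(0,L)^3$, periodic; $p_i=(i-\tfrac12)h$. $\mathcal{C}_{\rm per}$: real $N$-periodic grid functions on cell centers; $\langle\nu,\xi\rangle=h^3\sum_{i,j,k=1}^N\nu_{i,j,k}\xi_{i,j,k}$; $\mathring{\mathcal{C}}_{\rm per}$: those with zero sum; $\|\nu\|_\infty=\max|\nu_{i,j,k}|$. The face-centered mobility is $\check{\mathcal{M}}^n_{i+1/2,j,k}=\mathcal{M}(\tfrac12(\phi^n_{i+1,j,k}+\phi^n_{i,j,k}))$ and analogously on $y$- and $z$-faces. For a positive face function $\mathcal{D}$, $\nabla_h\cdot(\mathcal{D}\nabla_h\nu)_{i,j,k}=h^{-2}[\mathcal{D}_{i+1/2,j,k}(\nu_{i+1,j,k}-\nu_{i,j,k})-\mathcal{D}_{i-1/2,j,k}(\nu_{i,j,k}-\nu_{i-1,j,k})]$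 plus the analogous $y$ and $z$ terms. $\mathcal{L}_{\check{\mathcal{M}}^n}^{-1}\psi$, for $\psi\in\mathring{\mathcal{C}}_{\rm per}$, is the unique $v\in\mathring{\mathcal{C}}_{\rm per}$ with $-\nabla_h\cdot(\check{\mathcal{M}}^n\nabla_h v)=\psi$. *)

(* Defs.v *)
From HB Require Import structures.
From mathcomp Require Import all_boot all_order all_algebra.
From mathcomp Require Import reals.
Set Implicit Arguments. Unset Strict Implicit. Unset Printing Implicit Defensive.
Import Order.TTheory GRing.Theory Num.Theory.
Local Open Scope ring_scope.

(* Grid functions on cell centers, indexed by integers (i,j,k);
   index i corresponds to the cell center p_{i+1} = (i + 1/2) h. *)
Definition gridfun (R : realType) := int -> int -> int -> R.

Section Grid.
Variable R : realType.
Implicit Types (f g : gridfun R) (N : nat) (h : R).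

Definition periodic N f : Prop :=
  forall i j k : int,
    f (i + N%:Z) j k = f i j k /\ f i (j + N%:Z) k = f i j k /\
    f i j (k + N%:Z) = f i j k.

Definition ip N h f g : R :=
  h ^+ 3 * \sum_(i < N) \sum_(j < N) \sum_(k < N)
      f (Posz i) (Posz j) (Posz k) * g (Posz i) (Posz j) (Posz k).

Definition gone : gridfun R := fun _ _ _ => 1.

Definition gsub f g : gridfun R := fun i j k => f i j k - g i j k.

Definition zero_sum N f : Prop :=
  \sum_(i < N) \sum_(j < N) \sum_(k < N) f (Posz i) (Posz j) (Posz k) = 0.

Definition supnorm N f : R :=
  \big[Num.max/0]_(i < N) \big[Num.max/0]_(j < N) \big[Num.max/0]_(k < N)
      `|f (Posz i) (Posz j) (Posz k)|.

(* face-centered mobility: Mx i j k is the value at face (i+1/2, j, k), etc. *)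
Definition mobx (mob : R -> R) f : gridfun R :=
  fun i j k => mob ((f (i + 1) j k + f i j k) / 2).
Definition moby (mob : R -> R) f : gridfun R :=
  fun i j k => mob ((f i (j + 1) k + f i j k) / 2).
Definition mobz (mob : R -> R) f : gridfun R :=
  fun i j k => mob ((f i j (k + 1) + f i j k) / 2).

(* nabla_h . (D nabla_h v), with D given by its face values on x-, y-, z-faces *)
Definition divgrad h (Dx Dy Dz : gridfun R) (v : gridfun R) : gridfun R :=
  fun i j k =>
    h ^- 2 *
    ( (Dx i j k * (v (i + 1) j k - v i j k)
       - Dx (i - 1) j k * (v i j k - v (i - 1) j k))
    + (Dy i j k * (v i (j + 1) k - v i j k)
       - Dy i (j - 1) k * (v i j k - v i (j - 1) k))
    + (Dz i j k * (v i j (k + 1) - v i j k)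
       - Dz i j (k - 1) * (v i j k - v i j (k - 1))) ).

End Grid.

(* Main.v *)
Require Import Defs.
From HB Require Import structures.
From mathcomp Require Import all_boot all_order all_algebra.
From mathcomp Require Import reals.
From mathcomp Require Import ring lra.
Import Order.TTheory GRing.Theory Num.Theory.
Local Open Scope ring_scope.

Section S.
Variable R : realType.

Definition S3 (n : nat) (F : nat -> nat -> nat -> R) : R :=
  \sum_(i < n) \sum_(j < n) \sum_(k < n) F i j k.

Lemma sum_const_ord n (c : R) : \sum_(i < n) c = c * n%:R.
Proof. by rewrite sumr_const card_ord mulr_natr. Qed.

Lemma sum_widen (F : nat -> R) m n : (m <= n)%N -> (forall i, 0 <= F i) ->
  \sum_(i < m) F i <= \sum_(i < n) F i.
Proof.
move=> mn F0; rewrite -!(big_mkord xpredT) (big_cat_nat (leq0n m) mn) /=.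
by rewrite lerDl sumr_ge0.
Qed.

Lemma CS1 (F : nat -> R) p : (\sum_(i < p) F i) ^+ 2 <= p%:R * \sum_(i < p) F i ^+ 2.
Proof.
elim: p => [|p IH]; first by rewrite !big_ord0 expr0n mul0r.
rewrite !big_ord_recr /=.
set s := \sum_(i < p) _ in IH *; set Q := \sum_(i < p) _ in IH *.
have Q0 : 0 <= Q by rewrite sumr_ge0 // => i _; rewrite sqr_ge0.
set x := F p.
have [p0|pp] := posnP p.
  move: IH; rewrite /s /Q p0 !big_ord0 => _.
  rewrite add0r mul1r add0r; done.
have hp : 0 < p%:R :> R by rewrite ltr0n.
rewrite -natr1.
have h2 : 2 * s * x <= Q + p%:R * x ^+ 2.
  rewrite -(ler_pM2l hp).
  have := sqr_ge0 (s - p%:R * x).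
  nra.
nra.
Qed.

Lemma CS3 (F : nat -> nat -> nat -> R) p :
  (S3 p F) ^+ 2 <= (p%:R) ^+ 3 * S3 p (fun i j k => F i j k ^+ 2).
Proof.
rewrite /S3.
apply: (le_trans (CS1 (fun i => \sum_(j<p) \sum_(k<p) F i j k) p)).
rewrite exprS -mulrA; apply: ler_wpM2l; first exact: ler0n.
rewrite mulr_sumr; apply: ler_sum => i _.
apply: (le_trans (CS1 (fun j => \sum_(k<p) F i j k) p)).
rewrite exprS -mulrA; apply: ler_wpM2l; first exact: ler0n.
rewrite expr1 mulr_sumr; apply: ler_sum => j _.
exact: CS1.
Qed.

Lemma tele0 (W : nat -> R) (j n : nat) (jn : (j <= n)%N) :
  W j - W 0%N = \sum_(k < n) ((k < j)%N%:R * (W k.+1 - W k)).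
Proof.

rewrite -(telescope_sumr W (leq0n j)) big_mkord.
rewrite (big_ord_widen n (fun i => W i.+1 - W i) jn) big_mkcond /=.
by apply: eq_bigr => k _; case: ifP; rewrite ?mul1r ?mul0r.
Qed.

Lemma line (W : nat -> R) i j n : (i <= n)%N -> (j <= n)%N ->
  (W j - W i) ^+ 2 <= n%:R * \sum_(k < n) (W k.+1 - W k) ^+ 2.
Proof.
move=> hin jn.
have -> : W j - W i = \sum_(k < n) (((k < j)%N%:R - (k < i)%N%:R) * (W k.+1 - W k)).
  have -> : W j - W i = (W j - W 0%N) - (W i - W 0%N) by ring.
  rewrite (@tele0 W _ _ jn) (@tele0 W _ _ hin) -sumrB; apply: eq_bigr => k _; ring.
apply: (le_trans (CS1 (fun k => ((k < j)%N%:R - (k < i)%N%:R) * (W k.+1 - W k)) n)).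
apply: ler_wpM2l; first exact: ler0n.
apply: ler_sum => k _.
rewrite exprMn ler_piMl ?sqr_ge0 //.
by case: (k < j)%N; case: (k < i)%N; rewrite /= ?subrr ?subr0 ?sub0r ?sqrrN ?expr1n ?expr0n.
Qed.

Lemma S3_ext n (F G : nat -> nat -> nat -> R) :
  (forall i j k, F i j k = G i j k) -> S3 n F = S3 n G.
Proof. by move=> h; apply: eq_bigr => i _; apply: eq_bigr => j _; apply: eq_bigr => k _. Qed.

Lemma S3_le n (F G : nat -> nat -> nat -> R) :
  (forall i j k, (i < n)%N -> (j < n)%N -> (k < n)%N -> F i j k <= G i j k) -> S3 n F <= S3 n G.
Proof. by move=> h; apply: ler_sum => i _; apply: ler_sum => j _; apply: ler_sum => k _; apply: h. Qed.

Lemma S3_ge0 n (F : nat -> nat -> nat -> R) :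
  (forall i j k, 0 <= F i j k) -> 0 <= S3 n F.
Proof. by move=> h; apply: sumr_ge0 => i _; apply: sumr_ge0 => j _; apply: sumr_ge0 => k _. Qed.

Lemma S3_add n (F G : nat -> nat -> nat -> R) :
  S3 n (fun i j k => F i j k + G i j k) = S3 n F + S3 n G.
Proof.
rewrite /S3 -big_split; apply: eq_bigr => i _; rewrite -big_split.
by apply: eq_bigr => j _; rewrite -big_split.
Qed.

Lemma S3_scal n c (F : nat -> nat -> nat -> R) :
  S3 n (fun i j k => c * F i j k) = c * S3 n F.
Proof.
rewrite /S3 mulr_sumr; apply: eq_bigr => i _; rewrite mulr_sumr.
by apply: eq_bigr => j _; rewrite mulr_sumr.
Qed.

Lemma S3_sub n (F G : nat -> nat -> nat -> R) :
  S3 n (fun i j k => F i j k - G i j k) = S3 n F - S3 n G.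
Proof.
rewrite -mulN1r -S3_scal -S3_add; apply: S3_ext => i j k; ring.
Qed.

Lemma S3_const n (c : R) : S3 n (fun _ _ _ => c) = c * n%:R ^+ 3.
Proof. by rewrite /S3 !sum_const_ord; ring. Qed.

Lemma S3_dep23 n (G : nat -> nat -> R) :
  S3 n (fun i j k => G j k) = n%:R * \sum_(j < n) \sum_(k < n) G j k.
Proof. by rewrite /S3 sum_const_ord mulrC. Qed.

Lemma S3_dep12 n (G : nat -> nat -> R) :
  S3 n (fun i j k => G i j) = n%:R * \sum_(i < n) \sum_(j < n) G i j.
Proof.
rewrite /S3 mulr_sumr; apply: eq_bigr => i _; rewrite mulr_sumr.
by apply: eq_bigr => j _; rewrite sum_const_ord mulrC.
Qed.

Lemma S3_dep1 n (G : nat -> R) :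
  S3 n (fun i j k => G i) = n%:R ^+ 2 * \sum_(i < n) G i.
Proof.
rewrite /S3 mulr_sumr; apply: eq_bigr => i _.
rewrite (eq_bigr (fun _ => G i * n%:R)); last by move=> j _; rewrite sum_const_ord.
by rewrite sum_const_ord; ring.
Qed.

Lemma S3_dep3 n (G : nat -> R) :
  S3 n (fun i j k => G k) = n%:R ^+ 2 * \sum_(k < n) G k.
Proof.
rewrite /S3 (eq_bigr (fun _ => n%:R * \sum_(k < n) G k)).
  by rewrite sum_const_ord; ring.
by move=> i _; rewrite sum_const_ord mulrC.
Qed.

Lemma S3_widen m n (F : nat -> nat -> nat -> R) : (m <= n)%N ->
  (forall i j k, 0 <= F i j k) -> S3 m F <= S3 n F.
Proof.
move=> mn h; rewrite /S3.
have g2 : forall i j, 0 <= \sum_(k < n) F i j k by move=> i j; apply: sumr_ge0.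
have g1 : forall i, 0 <= \sum_(j < n) \sum_(k < n) F i j k
  by move=> i; apply: sumr_ge0 => j _.
apply: (le_trans _ (@sum_widen (fun i => \sum_(j < n) \sum_(k < n) F i j k) _ _ mn g1)).
apply: ler_sum => i _.
apply: (le_trans _ (@sum_widen (fun j => \sum_(k < n) F i j k) _ _ mn (g2 i))).
apply: ler_sum => j _.
exact: (@sum_widen (fun k => F i j k) _ _ mn).
Qed.

Lemma S3_1 (F : nat -> nat -> nat -> R) : S3 1 F = F 0%N 0%N 0%N.
Proof. by rewrite /S3 !big_ord1. Qed.

Definition eU (U : nat -> nat -> nat -> R) i j k :=
  (U i.+1 j k - U i j k) ^+ 2 + (U i j.+1 k - U i j k) ^+ 2 + (U i j k.+1 - U i j k) ^+ 2.

Lemma sq3 (a b c : R) : (a + b + c) ^+ 2 <= 3 * (a ^+ 2 + b ^+ 2 + c ^+ 2).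
Proof.
have := sqr_ge0 (a - b); have := sqr_ge0 (b - c); have := sqr_ge0 (a - c).
nra.
Qed.

Lemma Qlem n (U : nat -> nat -> nat -> R) :
  S3 n (fun x1 x2 x3 => S3 n (fun y1 y2 y3 => (U x1 x2 x3 - U y1 y2 y3) ^+ 2))
  <= 3 * n%:R ^+ 5 * S3 n (eU U).
Proof.
pose Lx j k := \sum_(i < n) (U i.+1 j k - U i j k) ^+ 2.
pose Ly i k := \sum_(j < n) (U i j.+1 k - U i j k) ^+ 2.
pose Lz i j := \sum_(k < n) (U i j k.+1 - U i j k) ^+ 2.
apply: (le_trans (y := S3 n (fun x1 x2 x3 => S3 n (fun y1 y2 y3 =>
   3 * n%:R * Lx x2 x3 + 3 * n%:R * Ly y1 x3 + 3 * n%:R * Lz y1 y2)))).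
  apply: S3_le => x1 x2 x3 h1 h2 h3; apply: S3_le => y1 y2 y3 g1 g2 g3.
  have -> : U x1 x2 x3 - U y1 y2 y3 = (U x1 x2 x3 - U y1 x2 x3) + (U y1 x2 x3 - U y1 y2 x3)
     + (U y1 y2 x3 - U y1 y2 y3) by ring.
  apply: (le_trans (sq3 _ _ _)).
  have ha := @line (fun t => U t x2 x3) _ _ _ (ltnW g1) (ltnW h1).
  have hb := @line (fun t => U y1 t x3) _ _ _ (ltnW g2) (ltnW h2).
  have hc := @line (fun t => U y1 y2 t) _ _ _ (ltnW g3) (ltnW h3).
  rewrite /Lx /Ly /Lz /=. simpl in ha, hb, hc.
  lra.
rewrite (S3_ext n _ (fun x1 x2 x3 => (3 * n%:R * Lx x2 x3) * n%:R ^+ 3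
   + 3 * n%:R * (n%:R ^+ 2 * \sum_(i < n) Ly i x3)
   + 3 * n%:R * (n%:R * \sum_(i < n) \sum_(j < n) Lz i j))); last first.
  move=> x1 x2 x3; rewrite !S3_add S3_const S3_scal S3_scal S3_dep1 S3_dep12 //.
rewrite !S3_add.
rewrite S3_dep23 S3_dep3 S3_const.
have eX : S3 n (fun i j k => (U i.+1 j k - U i j k) ^+ 2) = \sum_(j < n) \sum_(k < n) Lx j k.
  rewrite /S3 exchange_big /=; apply: eq_bigr => j _.
  by rewrite exchange_big.
have eY : S3 n (fun i j k => (U i j.+1 k - U i j k) ^+ 2) = \sum_(k < n) \sum_(i < n) Ly i k.
  rewrite exchange_big /=; apply: eq_bigr => i _.
  by rewrite exchange_big.
have eZ : S3 n (fun i j k => (U i j k.+1 - U i j k) ^+ 2) = \sum_(i < n) \sum_(j < n) Lz i j by [].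
rewrite eX eY eZ.
have -> : \sum_(j < n) \sum_(k < n) 3 * n%:R * Lx j k * n%:R ^+ 3 =
   3 * n%:R * n%:R ^+ 3 * \sum_(j < n) \sum_(k < n) Lx j k.
  rewrite mulr_sumr; apply: eq_bigr => j _; rewrite mulr_sumr; apply: eq_bigr => k _; ring.
have -> : \sum_(k < n) 3 * n%:R * (n%:R ^+ 2 * \sum_(i < n) Ly i k) =
   3 * n%:R * n%:R ^+ 2 * \sum_(k < n) \sum_(i < n) Ly i k.
  rewrite mulr_sumr; apply: eq_bigr => k _; ring.
rewrite le_eqVlt; apply/orP; left; apply/eqP; ring.
Qed.

Lemma Plem m n (U : nat -> nat -> nat -> R) : (0 < m)%N -> (m <= n)%N ->
  (S3 m U / m%:R ^+ 3 - S3 n U / n%:R ^+ 3) ^+ 2 <= 3 * n%:R ^+ 2 / m%:R ^+ 3 * S3 n (eU U).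
Proof.
move=> m0 mn.
have n0 : (0 < n)%N by apply: leq_trans mn.
set a := m%:R : R; set b := n%:R : R.
have a0 : 0 < a by rewrite ltr0n.
have b0 : 0 < b by rewrite ltr0n.
set D := S3 m (fun x1 x2 x3 => S3 n (fun y1 y2 y3 => U x1 x2 x3 - U y1 y2 y3)).
have eD : D = b ^+ 3 * S3 m U - a ^+ 3 * S3 n U.
  rewrite /D (S3_ext m _ (fun x1 x2 x3 => b ^+ 3 * U x1 x2 x3 - S3 n U)); last first.
    by move=> x1 x2 x3; rewrite S3_sub S3_const mulrC.
  by rewrite S3_sub S3_scal S3_const (mulrC (S3 n U)).
have E0 : 0 <= S3 n (eU U) by apply: S3_ge0 => i j k; rewrite /eU !addr_ge0 ?sqr_ge0.
have hD : D ^+ 2 <= a ^+ 3 * b ^+ 3 * (3 * b ^+ 5 * S3 n (eU U)).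
  apply: (le_trans (CS3 _ _)).
  rewrite -mulrA; apply: ler_wpM2l; first by rewrite exprn_ge0 ?ltW.
  apply: (le_trans (y := S3 m (fun x1 x2 x3 => b ^+ 3 *
      S3 n (fun y1 y2 y3 => (U x1 x2 x3 - U y1 y2 y3) ^+ 2)))).
    by apply: S3_le => x1 x2 x3 _ _ _; apply: CS3.
  rewrite S3_scal; apply: ler_wpM2l; first by rewrite exprn_ge0 ?ltW.
  apply: le_trans (Qlem n U).
  apply: S3_widen => // x1 x2 x3; apply: S3_ge0 => y1 y2 y3; exact: sqr_ge0.
have eQ : S3 m U / a ^+ 3 - S3 n U / b ^+ 3 = D / (a ^+ 3 * b ^+ 3).
  rewrite eD; field; rewrite ?gt_eqF ?exprn_gt0 //.
rewrite eQ.
rewrite expr_div_n ler_pdivrMr; last by rewrite exprn_gt0 // mulr_gt0 // exprn_gt0.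
apply: (le_trans hD).
rewrite le_eqVlt; apply/orP; left; apply/eqP; field.
by rewrite gt_eqF ?exprn_gt0.
Qed.

Definition Av (U : nat -> nat -> nat -> R) n := S3 n U / n%:R ^+ 3.

Lemma sqr_le_abs (x y : R) : 0 <= y -> x ^+ 2 <= y ^+ 2 -> `|x| <= y.
Proof.
move=> y0 h.
have hn := normr_ge0 x.
have e : `|x| ^+ 2 = x ^+ 2 by rewrite real_normK ?num_real.
nra.
Qed.

Lemma step_lem (U : nat -> nat -> nat -> R) N E k n :
  (2 ^ k <= n)%N -> (n <= 2 * 2 ^ k)%N -> (n <= N)%N ->
  S3 n (eU U) <= E ->
  (Av U (2 ^ k) - Av U n) ^+ 2 <= 12 * E * (9 / 16) ^+ k.
Proof.
move=> h1 h2 h3 hE.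
have m0 : (0 < 2 ^ k)%N by rewrite expn_gt0.
have E0 : 0 <= S3 n (eU U) by apply: S3_ge0 => i j l; rewrite /eU !addr_ge0 ?sqr_ge0.
rewrite /Av; apply: (le_trans (@Plem _ _ U m0 h1)).
set m := (2 ^ k)%N.
have am : 0 < m%:R :> R by rewrite ltr0n.
have nm : n%:R <= 2 * m%:R :> R by rewrite -natrM ler_nat.
have n0 : 0 <= n%:R :> R by exact: ler0n.
have hq : 1 <= m%:R * (9 / 16) ^+ k :> R.
  rewrite /m natrX -exprMn; apply: exprn_ege1; lra.
have hq0 : 0 <= (9 / 16) ^+ k :> R by apply: exprn_ge0; lra.
have h4 : 3 * n%:R ^+ 2 / m%:R ^+ 3 <= 12 * (9 / 16) ^+ k :> R.
  rewrite ler_pdivrMr; last by rewrite exprn_gt0.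
  have : n%:R ^+ 2 <= 4 * m%:R ^+ 2 :> R.
    have -> : 4 * m%:R ^+ 2 = (2 * m%:R) ^+ 2 :> R by ring.
    by rewrite ler_sqr ?nnegrE // mulr_ge0 // ltW.
  move=> h5.
  have : 12 * m%:R ^+ 2 <= 12 * (9 / 16) ^+ k * m%:R ^+ 3 :> R.
    have -> : 12 * (9 / 16) ^+ k * m%:R ^+ 3 = 12 * m%:R ^+ 2 * (m%:R * (9/16) ^+ k) :> R by ring.
    rewrite ler_peMr // mulr_ge0 // exprn_ge0 // ltW //.
  lra.
apply: (le_trans (ler_wpM2l _ hE)).
  by apply: divr_ge0; rewrite ?mulr_ge0 ?exprn_ge0 // ltW.
have E0' : 0 <= E by apply: le_trans hE.
rewrite [12 * E * _]mulrAC; exact: ler_wpM2r.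
Qed.

Lemma sob (U : nat -> nat -> nat -> R) N E : (0 < N)%N ->
  (forall n, (n <= N)%N -> S3 n (eU U) <= E) -> S3 N U = 0 ->
  (U 0%N 0%N 0%N) ^+ 2 <= 192 * E.
Proof.
move=> N0 hE hS.
have E0 : 0 <= E.
  apply: le_trans (hE N (leqnn N)).
  by apply: S3_ge0 => i j l; rewrite /eU !addr_ge0 ?sqr_ge0.
set s := Num.sqrt (12 * E).
have s0 : 0 <= s by apply: sqrtr_ge0.
have ss : s ^+ 2 = 12 * E by rewrite sqr_sqrtr // mulr_ge0.
set q := (3 / 4 : R).
have q0 : 0 <= q by rewrite /q; lra.
have q1 : q <= 1 by rewrite /q; lra.
have qq : q ^+ 2 = 9 / 16 by rewrite /q; field.
have stepa : forall k n, (2 ^ k <= n)%N -> (n <= 2 * 2 ^ k)%N -> (n <= N)%N ->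
    `|Av U (2 ^ k) - Av U n| <= s * q ^+ k.
  move=> k n h1 h2 h3; apply: sqr_le_abs; first by rewrite mulr_ge0 // exprn_ge0.
  rewrite exprMn ss -exprM mulnC exprM qq.
  exact: (@step_lem U N E k n h1 h2 h3 (hE n h3)).
have ind : forall k, (2 ^ k <= N)%N -> `|Av U 1 - Av U (2 ^ k)| <= 4 * s * (1 - q ^+ k).
  elim=> [|k IH] hk; first by rewrite expn0 subrr normr0 expr0 subrr mulr0.
  have hk' : (2 ^ k <= N)%N by apply: leq_trans hk; rewrite leq_exp2l.
  have := IH hk'.
  have := stepa k (2 ^ k.+1)%N; rewrite expnS leq_pmull // leqnn => /(_ isT isT).
  rewrite -expnS => /(_ hk) h2 h1.
  apply: (le_trans (y := `|Av U 1 - Av U (2 ^ k)| + `|Av U (2 ^ k) - Av U (2 ^ k.+1)|)).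
    have -> : Av U 1 - Av U (2 ^ k.+1) = (Av U 1 - Av U (2 ^ k)) + (Av U (2 ^ k) - Av U (2 ^ k.+1))
      by ring.
    exact: ler_normD.
  rewrite exprS.
  have : 0 <= s * q ^+ k by rewrite mulr_ge0 // exprn_ge0.
  rewrite /q in h1 h2 *. nra.
set K := trunc_log 2 N.
have hK1 : (2 ^ K <= N)%N by apply: trunc_logP.
have hK2 : (N <= 2 * 2 ^ K)%N by rewrite -expnS ltnW // trunc_log_ltn.
have A1 : Av U 1 = U 0%N 0%N 0%N by rewrite /Av S3_1 expr1n divr1.
have AN : Av U N = 0 by rewrite /Av hS mul0r.
have h1 := ind K hK1.
have h2 := stepa K N hK1 hK2 (leqnn N).
have hu : `|U 0%N 0%N 0%N| <= 4 * s.
  rewrite -A1 -[Av U 1]subr0 -AN.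
  apply: (le_trans (y := `|Av U 1 - Av U (2 ^ K)| + `|Av U (2 ^ K) - Av U N|)).
    have -> : Av U 1 - Av U N = (Av U 1 - Av U (2 ^ K)) + (Av U (2 ^ K) - Av U N)
      by ring.
    exact: ler_normD.
  have : 0 <= s * q ^+ K by rewrite mulr_ge0 // exprn_ge0.
  have : q ^+ K <= 1 by apply: exprn_ile1.
  nra.
have : U 0%N 0%N 0%N ^+ 2 = `|U 0%N 0%N 0%N| ^+ 2 by rewrite real_normK ?num_real.
have := normr_ge0 (U 0%N 0%N 0%N).
nra.
Qed.



Lemma shift_step (H : nat -> R) N : H N = H 0%N ->
  \sum_(i < N) H i.+1 = \sum_(i < N) H i.
Proof.
case: N => [|N] hN; first by rewrite !big_ord0.
rewrite big_ord_recr big_ord_recl /= hN addrC; congr (_ + _); apply: eq_bigr => i _; rewrite lift0 //.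

Qed.

Lemma shift1D (G : int -> R) N : (forall x, G (x + N%:Z) = G x) ->
  forall a : nat, \sum_(i < N) G (i%:Z + a%:Z) = \sum_(i < N) G i%:Z.
Proof.
move=> hG; elim=> [|a IH]; first by apply: eq_bigr => i _; rewrite addr0.
rewrite -IH.
rewrite -(@shift_step (fun i : nat => G (i%:Z + a%:Z))); last first.
  by rewrite /= add0r addrC hG.
apply: eq_bigr => i _.
by rewrite -!PoszD addSnnS.
Qed.

Definition T3 N (g : gridfun R) := S3 N (fun i j k => g i%:Z j%:Z k%:Z).
Definition anch (g : gridfun R) (a b c : int) : nat -> nat -> nat -> R :=
  fun i j k => g (i%:Z + a) (j%:Z + b) (k%:Z + c).

Lemma shall N (g : gridfun R) : periodic N g -> forall a b c : nat,
  S3 N (anch g a%:Z b%:Z c%:Z) = T3 N g.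
Proof.
move=> hp a b c; rewrite /S3 /anch /T3.
rewrite (eq_bigr (fun i : 'I_N => \sum_(j < N) \sum_(k < N) g (i%:Z + a%:Z) j%:Z k%:Z)).
  apply: (shift1D (fun x => \sum_(j < N) \sum_(k < N) g x j%:Z k%:Z) N).
  move=> x; apply: eq_bigr => j _; apply: eq_bigr => k _; exact: (hp _ _ _).1.
move=> i _.
rewrite (eq_bigr (fun j : 'I_N => \sum_(k < N) g (i%:Z + a%:Z) (j%:Z + b%:Z) k%:Z)).
  apply: (shift1D (fun y => \sum_(k < N) g (i%:Z + a%:Z) y k%:Z) N).
  move=> y; apply: eq_bigr => k _; exact: (hp _ _ _).2.1.
move=> j _.
apply: (shift1D (fun z => g (i%:Z + a%:Z) (j%:Z + b%:Z) z) N).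
move=> z; exact: (hp _ _ _).2.2.
Qed.

Lemma per_shift N (g : gridfun R) (d1 d2 d3 : int) : periodic N g ->
  periodic N (fun x y z => g (x + d1) (y + d2) (z + d3)).
Proof.
move=> hp x y z /=; rewrite !(addrAC _ N%:Z).
by have [h1 [h2 h3]] := hp (x + d1) (y + d2) (z + d3).
Qed.

Lemma per_op2 N (g1 g2 : gridfun R) (op : R -> R -> R) : periodic N g1 -> periodic N g2 ->
  periodic N (fun x y z => op (g1 x y z) (g2 x y z)).
Proof.
move=> p1 p2 x y z /=.
have [a1 [a2 a3]] := p1 x y z; have [b1 [b2 b3]] := p2 x y z.
by rewrite a1 a2 a3 b1 b2 b3.
Qed.

Lemma per_op1 N (g : gridfun R) (op : R -> R) : periodic N g ->
  periodic N (fun x y z => op (g x y z)).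
Proof.
move=> p x y z /=; have [a1 [a2 a3]] := p x y z.
by rewrite a1 a2 a3.
Qed.

Lemma per_ext N (g g' : gridfun R) : periodic N g -> (forall x y z, g' x y z = g x y z) ->
  periodic N g'.
Proof. by move=> p e x y z; rewrite !e; apply: p. Qed.

Lemma per_mobx N mob (p : gridfun R) : periodic N p -> periodic N (mobx mob p).
Proof.
move=> hp; apply: (@per_ext N (fun x y z => mob ((p (x + 1) (y + 0) (z + 0) + p x y z) / 2))).
  apply: (@per_op1 N _ (fun r => mob (r / 2))).
  apply: (@per_op2 N _ _ +%R) => //; exact: per_shift.
by move=> x y z; rewrite /mobx !addr0.
Qed.

Lemma per_moby N mob (p : gridfun R) : periodic N p -> periodic N (moby mob p).
Proof.
move=> hp; apply: (@per_ext N (fun x y z => mob ((p (x + 0) (y + 1) (z + 0) + p x y z) / 2))).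
  apply: (@per_op1 N _ (fun r => mob (r / 2))).
  apply: (@per_op2 N _ _ +%R) => //; exact: per_shift.
by move=> x y z; rewrite /moby !addr0.
Qed.

Lemma per_mobz N mob (p : gridfun R) : periodic N p -> periodic N (mobz mob p).
Proof.
move=> hp; apply: (@per_ext N (fun x y z => mob ((p (x + 0) (y + 0) (z + 1) + p x y z) / 2))).
  apply: (@per_op1 N _ (fun r => mob (r / 2))).
  apply: (@per_op2 N _ _ +%R) => //; exact: per_shift.
by move=> x y z; rewrite /mobz !addr0.
Qed.

Lemma bigmax_ge (F : nat -> R) n i : (i < n)%N -> F i <= \big[Num.max/0]_(j < n) F j.
Proof.
elim: n F i => [|n IH] F i //.
rewrite big_ord_recl; case: i => [|i] hi.
  by rewrite le_max lexx.
rewrite le_max; apply/orP; right.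
have -> : \big[Num.max/0]_(j < n) F (lift ord0 j) = \big[Num.max/0]_(j < n) F j.+1.
  by apply: eq_bigr => j _; rewrite lift0.
exact: (IH (fun j => F j.+1) i hi).
Qed.

Lemma bigmax_le (F : nat -> R) n B : 0 <= B -> (forall i, (i < n)%N -> F i <= B) ->
  \big[Num.max/0]_(j < n) F j <= B.
Proof.
move=> B0 h; apply: (big_ind (fun x => x <= B)) => //.
  by move=> x y hx hy; rewrite ge_max hx hy.
by move=> i _; apply: h.
Qed.

Lemma elem_le_sup N (f : gridfun R) (i j k : nat) : (i < N)%N -> (j < N)%N -> (k < N)%N ->
  `|f i%:Z j%:Z k%:Z| <= supnorm N f.
Proof.
move=> hi hj hk; rewrite /supnorm.
apply: (le_trans _ (@bigmax_ge (fun i : nat => \big[Num.max/0]_(j < N) \big[Num.max/0]_(k < N)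
   `|f i%:Z j%:Z k%:Z|) _ _ hi)).
apply: (le_trans _ (@bigmax_ge (fun j : nat => \big[Num.max/0]_(k < N)
   `|f i%:Z j%:Z k%:Z|) _ _ hj)).
exact: (@bigmax_ge (fun k : nat => `|f i%:Z j%:Z k%:Z|) _ _ hk).
Qed.

Lemma sup_le N (f : gridfun R) B : 0 <= B ->
  (forall i j k : nat, (i < N)%N -> (j < N)%N -> (k < N)%N -> `|f i%:Z j%:Z k%:Z| <= B) ->
  supnorm N f <= B.
Proof.
move=> B0 h; rewrite /supnorm.
apply: (@bigmax_le (fun i : nat => \big[Num.max/0]_(j < N) \big[Num.max/0]_(k < N)
   `|f i%:Z j%:Z k%:Z|)) => // i hi.
apply: (@bigmax_le (fun j : nat => \big[Num.max/0]_(k < N) `|f i%:Z j%:Z k%:Z|)) => // j hj.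
apply: (@bigmax_le (fun k : nat => `|f i%:Z j%:Z k%:Z|)) => // k hk.
exact: h.
Qed.

Definition ge (v : gridfun R) x y z :=
  (v (x + 1) y z - v x y z) ^+ 2 + (v x (y + 1) z - v x y z) ^+ 2 + (v x y (z + 1) - v x y z) ^+ 2.

Lemma eU_anch v a b c i j k :
  eU (anch v a b c) i j k = ge v (i%:Z + a) (j%:Z + b) (k%:Z + c).
Proof.
have e : forall (i : nat) (a : int), (i.+1)%:Z + a = i%:Z + a + 1.
  by move=> i0 a0; rewrite -addn1 PoszD addrAC.
by rewrite /eU /anch /ge !e.
Qed.

Lemma per_ge N v : periodic N v -> periodic N (ge v).
Proof.
move=> hp.
have hs : forall d1 d2 d3 : int, periodic N
    (fun x y z => (v (x + d1) (y + d2) (z + d3) - v x y z) ^+ 2).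
  move=> d1 d2 d3; apply: (@per_op2 N _ _ (fun a b => (a - b) ^+ 2)) => //.
  exact: per_shift.
apply: (@per_ext N (fun x y z => ((v (x + 1) (y + 0) (z + 0) - v x y z) ^+ 2
    + (v (x + 0) (y + 1) (z + 0) - v x y z) ^+ 2) + (v (x + 0) (y + 0) (z + 1) - v x y z) ^+ 2)).
  apply: (@per_op2 N _ _ +%R) => //.
  by apply: (@per_op2 N _ _ +%R).
by move=> x y z; rewrite /ge !addr0.
Qed.

Definition Etor N v := T3 N (ge v).

Lemma E_anch N v : periodic N v -> forall a b c : nat,
  S3 N (eU (anch v a%:Z b%:Z c%:Z)) = Etor N v.
Proof.
move=> hp a b c; rewrite (S3_ext _ _ (fun i j k => anch (ge v) a%:Z b%:Z c%:Z i j k)).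
  by rewrite shall //; apply: per_ge.
by move=> i j k; rewrite eU_anch.
Qed.

Lemma anch0 N (g : gridfun R) : S3 N (anch g 0 0 0) = T3 N g.
Proof. by apply: S3_ext => i j k; rewrite /anch !addr0. Qed.

Lemma poinc N v : (0 < N)%N -> periodic N v -> T3 N v = 0 ->
  T3 N (fun x y z => v x y z ^+ 2) <= 3 * N%:R ^+ 2 * Etor N v.
Proof.
move=> N0 hp hz.
set U := anch v 0 0 0.
set n := N%:R : R.
have n0 : 0 < n by rewrite ltr0n.
have hS0 : S3 N U = 0 by rewrite /U anch0.
have hE : S3 N (eU U) = Etor N v by rewrite /U (@E_anch N v hp 0 0 0).
have eT : T3 N (fun x y z => v x y z ^+ 2) = S3 N (fun i j k => U i j k ^+ 2).
  by apply: S3_ext => i j k; rewrite /U /anch !addr0.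
have key : forall x1 x2 x3, U x1 x2 x3 ^+ 2 * n ^+ 6 <=
    n ^+ 3 * S3 N (fun y1 y2 y3 => (U x1 x2 x3 - U y1 y2 y3) ^+ 2).
  move=> x1 x2 x3.
  have -> : U x1 x2 x3 ^+ 2 * n ^+ 6 = (S3 N (fun y1 y2 y3 => U x1 x2 x3 - U y1 y2 y3)) ^+ 2.
    rewrite S3_sub S3_const hS0; rewrite /n; ring.
  exact: CS3.
have h1 : S3 N (fun i j k => U i j k ^+ 2) * n ^+ 6 <= n ^+ 3 * (3 * n ^+ 5 * S3 N (eU U)).
  rewrite [S3 N _ * _]mulrC -[n ^+ 6 * _]S3_scal.
  apply: (le_trans (y := S3 N (fun x1 x2 x3 => n ^+ 3 *
      S3 N (fun y1 y2 y3 => (U x1 x2 x3 - U y1 y2 y3) ^+ 2)))).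
    by apply: S3_le => x1 x2 x3 _ _ _; rewrite mulrC key.
  rewrite S3_scal; apply: ler_wpM2l; first by rewrite exprn_ge0 // ltW.
  exact: Qlem.
rewrite eT -hE.
rewrite -(ler_pM2r (exprn_gt0 6 n0)); apply: (le_trans h1).
rewrite le_eqVlt; apply/orP; left; apply/eqP; ring.
Qed.

Lemma per_mul N (g1 g2 : gridfun R) : periodic N g1 -> periodic N g2 ->
  periodic N (fun x y z => g1 x y z * g2 x y z).
Proof. exact: (@per_op2 N g1 g2 *%R). Qed.

Lemma per_sub N (g1 g2 : gridfun R) : periodic N g1 -> periodic N g2 ->
  periodic N (fun x y z => g1 x y z - g2 x y z).
Proof. exact: (@per_op2 N g1 g2 (fun a b => a - b)). Qed.

Lemma per_sx N (g : gridfun R) d : periodic N g -> periodic N (fun x y z => g (x + d) y z).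
Proof.
move=> hp; apply: (@per_ext N (fun x y z => g (x + d) (y + 0) (z + 0))).
  exact: per_shift.
by move=> x y z; rewrite !addr0.
Qed.

Lemma per_sy N (g : gridfun R) d : periodic N g -> periodic N (fun x y z => g x (y + d) z).
Proof.
move=> hp; apply: (@per_ext N (fun x y z => g (x + 0) (y + d) (z + 0))).
  exact: per_shift.
by move=> x y z; rewrite !addr0.
Qed.

Lemma per_sz N (g : gridfun R) d : periodic N g -> periodic N (fun x y z => g x y (z + d)).
Proof.
move=> hp; apply: (@per_ext N (fun x y z => g (x + 0) (y + 0) (z + d))).
  exact: per_shift.
by move=> x y z; rewrite !addr0.
Qed.

Lemma shiftx N (g : gridfun R) : periodic N g -> T3 N (fun x y z => g (x + 1) y z) = T3 N g.
Proof.
move=> hp; rewrite -(@shall N g hp 1 0 0); apply: S3_ext => i j k.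
by rewrite /anch !addr0.
Qed.

Lemma shifty N (g : gridfun R) : periodic N g -> T3 N (fun x y z => g x (y + 1) z) = T3 N g.
Proof.
move=> hp; rewrite -(@shall N g hp 0 1 0); apply: S3_ext => i j k.
by rewrite /anch !addr0.
Qed.

Lemma shiftz N (g : gridfun R) : periodic N g -> T3 N (fun x y z => g x y (z + 1)) = T3 N g.
Proof.
move=> hp; rewrite -(@shall N g hp 0 0 1); apply: S3_ext => i j k.
by rewrite /anch !addr0.
Qed.

Lemma T3_ext N (g g' : gridfun R) : (forall x y z, g x y z = g' x y z) -> T3 N g = T3 N g'.
Proof. by move=> e; apply: S3_ext => i j k; rewrite e. Qed.

Lemma energy N h (D1 D2 D3 v f : gridfun R) :
  periodic N D1 -> periodic N D2 -> periodic N D3 -> periodic N v ->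
  (forall i j k, - divgrad h D1 D2 D3 v i j k = f i j k) ->
  T3 N (fun x y z => f x y z * v x y z) =
  h ^- 2 * T3 N (fun x y z => D1 x y z * (v (x + 1) y z - v x y z) ^+ 2
     + D2 x y z * (v x (y + 1) z - v x y z) ^+ 2 + D3 x y z * (v x y (z + 1) - v x y z) ^+ 2).
Proof.
move=> p1 p2 p3 pv heq.
pose B1 x y z := D1 (x - 1) y z * (v x y z - v (x - 1) y z) * v x y z.
pose B2 x y z := D2 x (y - 1) z * (v x y z - v x (y - 1) z) * v x y z.
pose B3 x y z := D3 x y (z - 1) * (v x y z - v x y (z - 1)) * v x y z.
have pB1 : periodic N B1.
  apply: per_mul => //; apply: per_mul; first exact: per_sx.
  by apply: per_sub => //; apply: per_sx.
have pB2 : periodic N B2.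
  apply: per_mul => //; apply: per_mul; first exact: per_sy.
  by apply: per_sub => //; apply: per_sy.
have pB3 : periodic N B3.
  apply: per_mul => //; apply: per_mul; first exact: per_sz.
  by apply: per_sub => //; apply: per_sz.
have e1 : T3 N B1 = T3 N (fun x y z => D1 x y z * (v (x + 1) y z - v x y z) * v (x + 1) y z).
  by rewrite -(@shiftx N B1 pB1); apply: T3_ext => x y z; rewrite /B1 addrK.
have e2 : T3 N B2 = T3 N (fun x y z => D2 x y z * (v x (y + 1) z - v x y z) * v x (y + 1) z).
  by rewrite -(@shifty N B2 pB2); apply: T3_ext => x y z; rewrite /B2 addrK.
have e3 : T3 N B3 = T3 N (fun x y z => D3 x y z * (v x y (z + 1) - v x y z) * v x y (z + 1)).
  by rewrite -(@shiftz N B3 pB3); apply: T3_ext => x y z; rewrite /B3 addrK.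
have -> : T3 N (fun x y z => f x y z * v x y z) =
  - h ^- 2 * ((T3 N (fun x y z => D1 x y z * (v (x + 1) y z - v x y z) * v x y z) - T3 N B1)
   + (T3 N (fun x y z => D2 x y z * (v x (y + 1) z - v x y z) * v x y z) - T3 N B2)
   + (T3 N (fun x y z => D3 x y z * (v x y (z + 1) - v x y z) * v x y z) - T3 N B3)).
  rewrite /T3 -!S3_sub -!S3_add -S3_scal; apply: S3_ext => i j k.
  by rewrite -heq /divgrad /B1 /B2 /B3; ring.
rewrite e1 e2 e3 /T3 -!S3_sub -!S3_add -!S3_scal; apply: S3_ext => i j k.
ring.
Qed.

End S.
Arguments S3 {R}.
Arguments sum_const_ord {R}.
Arguments sum_widen {R}.
Arguments CS1 {R}.
Arguments CS3 {R}.
Arguments tele0 {R}.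
Arguments line {R}.
Arguments S3_ext {R}.
Arguments S3_le {R}.
Arguments S3_ge0 {R}.
Arguments S3_add {R}.
Arguments S3_scal {R}.
Arguments S3_sub {R}.
Arguments S3_const {R}.
Arguments S3_dep23 {R}.
Arguments S3_dep12 {R}.
Arguments S3_dep1 {R}.
Arguments S3_dep3 {R}.
Arguments S3_widen {R}.
Arguments S3_1 {R}.
Arguments eU {R}.
Arguments sq3 {R}.
Arguments Qlem {R}.
Arguments Plem {R}.
Arguments Av {R}.
Arguments sqr_le_abs {R}.
Arguments step_lem {R}.
Arguments sob {R}.
Arguments shift_step {R}.
Arguments shift1D {R}.
Arguments T3 {R}.
Arguments anch {R}.
Arguments shall {R}.
Arguments per_shift {R}.
Arguments per_op2 {R}.
Arguments per_op1 {R}.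
Arguments per_ext {R}.
Arguments per_mobx {R}.
Arguments per_moby {R}.
Arguments per_mobz {R}.
Arguments bigmax_ge {R}.
Arguments bigmax_le {R}.
Arguments elem_le_sup {R}.
Arguments sup_le {R}.
Arguments ge {R}.
Arguments eU_anch {R}.
Arguments per_ge {R}.
Arguments Etor {R}.
Arguments E_anch {R}.
Arguments anch0 {R}.
Arguments poinc {R}.
Arguments per_mul {R}.
Arguments per_sub {R}.
Arguments per_sx {R}.
Arguments per_sy {R}.
Arguments per_sz {R}.
Arguments shiftx {R}.
Arguments shifty {R}.
Arguments shiftz {R}.
Arguments T3_ext {R}.
Arguments energy {R}.

Theorem lemma3p2 (R : realType) (L : R) (Mb : R) :
  0 < L -> 0 < Mb ->
  exists C3 : R, 0 < C3 /\
  forall (N : nat) (M0 : R) (mob : R -> R) (phin phi1 phi2 v : gridfun R),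
    (0 < N)%N -> 0 < M0 ->
    periodic N phin -> periodic N phi1 -> periodic N phi2 ->
    (forall i j k : int,
        M0 <= mobx mob phin i j k /\ M0 <= moby mob phin i j k /\
        M0 <= mobz mob phin i j k) ->
    ip N (L / N%:R) (gsub phi1 phi2) (@gone R) = 0 ->
    supnorm N phi1 < 1 ->
    supnorm N phi2 <= Mb ->
    (* v = L_{M^n}^{-1}(phi1 - phi2): the zero-mean periodic solution of
       - nabla_h . (M^n nabla_h v) = phi1 - phi2 *)
    periodic N v -> zero_sum N v ->
    (forall i j k : int,
        - divgrad (L / N%:R) (mobx mob phin) (moby mob phin) (mobz mob phin) v i j k
        = gsub phi1 phi2 i j k) ->
    supnorm N v <= C3 / M0 / Num.sqrt (L / N%:R).
Proof.
move=> L0 Mb0.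
set F := 1 + Mb.
have F0 : 0 < F by rewrite /F; lra.
set sL := Num.sqrt L.
have sL0 : 0 < sL by rewrite sqrtr_gt0.
have sLL : sL ^+ 2 = L by rewrite sqr_sqrtr // ltW.
exists (24 * F * L ^+ 2 * sL); split.
  by rewrite !mulr_gt0 // exprn_gt0.
move=> N M0 mob phin phi1 phi2 v N0 M00 pn p1 p2 hM hip hs1 hs2 pv zv heq.
set h := L / N%:R in heq *.
set n := N%:R : R.
have n0 : 0 < n by rewrite ltr0n.
have h0 : 0 < h by rewrite /h divr_gt0.
set sh := Num.sqrt h.
have sh0 : 0 < sh by rewrite sqrtr_gt0.
have shh : sh ^+ 2 = h by rewrite sqr_sqrtr // ltW.
set f := gsub phi1 phi2 in heq *.
have pf : periodic N f by apply: per_sub.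
have fb : forall i j k : nat, (i < N)%N -> (j < N)%N -> (k < N)%N -> `|f i%:Z j%:Z k%:Z| <= F.
  move=> i j k hi hj hk; rewrite /f /gsub.
  have a1 := @elem_le_sup _ N phi1 i j k hi hj hk.
  have a2 := @elem_le_sup _ N phi2 i j k hi hj hk.
  apply: (le_trans (ler_normB _ _)); rewrite /F; lra.
set E := Etor N v.
have E0 : 0 <= E by apply: S3_ge0 => i j k; rewrite /ge !addr_ge0 ?sqr_ge0.
set S := T3 N (fun x y z => f x y z * v x y z).
have hen := @energy _ N h _ _ _ v f (@per_mobx _ N mob phin pn) (@per_moby _ N mob phin pn) (@per_mobz _ N mob phin pn) pv heq.
have hS : M0 * E <= h ^+ 2 * S.
  rewrite /S hen mulrA mulrV ?mul1r; last by rewrite unitfE expf_neq0 // gt_eqF.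
  rewrite /E /Etor /T3 -S3_scal; apply: S3_le => i j k _ _ _.
  have [m1 [m2 m3]] := hM i j k.
  rewrite /ge !mulrDr.
  have q1 := sqr_ge0 (v (i%:Z + 1) j k - v i j k).
  have q2 := sqr_ge0 (v i (j%:Z + 1) k - v i j k).
  have q3 := sqr_ge0 (v i j (k%:Z + 1) - v i j k).
  apply: lerD; first apply: lerD; by apply: ler_wpM2r.
have hP := @poinc _ N v N0 pv zv.
have young : forall t, 2 * t * S <= t ^+ 2 * (F ^+ 2 * n ^+ 3) + 3 * n ^+ 2 * E.
  move=> t; apply: (le_trans (y := T3 N (fun x y z => t ^+ 2 * f x y z ^+ 2 + v x y z ^+ 2))).
    rewrite /S /T3 -S3_scal; apply: S3_le => i j k _ _ _.
    have := sqr_ge0 (t * f i j k - v i j k); nra.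
  rewrite /T3 S3_add S3_scal; apply: lerD => //.
  apply: ler_wpM2l; first exact: sqr_ge0.
  rewrite -S3_const; apply: S3_le => i j k hi hj hk.
  have := fb i j k hi hj hk; have := normr_ge0 (f i j k).
  have : `|f i j k| ^+ 2 = f i j k ^+ 2 by rewrite real_normK ?num_real.
  nra.
set t := 3 * n ^+ 2 * h ^+ 2 / M0.
have a1 : 6 * n ^+ 2 * E <= 2 * t * S.
  have -> : 2 * t * S = (6 * n ^+ 2 / M0) * (h ^+ 2 * S) by rewrite /t; ring.
  have -> : 6 * n ^+ 2 * E = (6 * n ^+ 2 / M0) * (M0 * E) by field; rewrite gt_eqF.
  apply: ler_wpM2l; last exact: hS.
  by apply: divr_ge0; rewrite ?mulr_ge0 ?exprn_ge0 // ltW.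
have a2 := young t.
have hEb : E <= 3 * n ^+ 5 * h ^+ 4 * F ^+ 2 / M0 ^+ 2.
  have a3 : 3 * n ^+ 2 * E <= t ^+ 2 * (F ^+ 2 * n ^+ 3).
    have a4 := le_trans a1 a2.
    move: a4; set X := n ^+ 2 * E; set Y := t ^+ 2 * (F ^+ 2 * n ^+ 3).
    rewrite !mulrA -/X.
    lra.
  have -> : 3 * n ^+ 5 * h ^+ 4 * F ^+ 2 / M0 ^+ 2 = t ^+ 2 * (F ^+ 2 * n ^+ 3) / (3 * n ^+ 2).
    by rewrite /t; field; rewrite -/n !gt_eqF.
  by rewrite ler_pdivlMr ?mulr_gt0 ?exprn_gt0 // mulrC.
have pt : forall a b c : nat, (a < N)%N -> (b < N)%N -> (c < N)%N ->
    v a%:Z b%:Z c%:Z ^+ 2 <= 192 * E.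
  move=> a b c ha hb hc.
  have hE' : forall m, (m <= N)%N -> S3 m (eU (anch v a%:Z b%:Z c%:Z)) <= E.
    move=> m hm; apply: (le_trans (@S3_widen _ m N _ hm _)).
      by move=> i j k; rewrite /eU !addr_ge0 ?sqr_ge0.
    by rewrite (@E_anch _ N v pv a b c).
  have hS' : S3 N (anch v a%:Z b%:Z c%:Z) = 0 by rewrite (@shall _ N v pv a b c).
  have H := @sob _ (anch v a%:Z b%:Z c%:Z) N E N0 hE' hS'.
  by rewrite /anch !add0r in H.
apply: sup_le.
  by apply: divr_ge0; [apply: divr_ge0; rewrite ?ltW // !mulr_gt0 // exprn_gt0 | exact: ltW].
move=> a b c ha hb hc; apply: sqr_le_abs.
  by apply: divr_ge0; [apply: divr_ge0; rewrite ?ltW // !mulr_gt0 // exprn_gt0 | exact: ltW].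
apply: (le_trans (pt a b c ha hb hc)).
have -> : (24 * F * L ^+ 2 * sL / M0 / sh) ^+ 2 = 576 * F ^+ 2 * L ^+ 4 * sL ^+ 2 / M0 ^+ 2 / sh ^+ 2.
  by field; rewrite !gt_eqF.
rewrite sLL shh.
have -> : 576 * F ^+ 2 * L ^+ 4 * L / M0 ^+ 2 / h = 192 * (3 * n ^+ 5 * h ^+ 4 * F ^+ 2 / M0 ^+ 2).
  rewrite /h; field; rewrite !gt_eqF //.
by apply: ler_wpM2l.
Qed.
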